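(* Fix $k\in\mathbb{N}$ and let $Q$ be a class of graphs (closed under isomorphism) each of treewidth at most $k$. Then $P_Q$ is weakly distinguishing.
   Context: All graphs are finite and simple. For a class $Q$, $P_Q(G;X)=\sum_{A\subseteq V(G):\, G[A]\in Q}X^{|A|}$, where $G[A]$ is the induced subgraph on $A$. A graph $G$ is $P$-unique if every graph $H$ with $P(G)=P(H)$ is isomorphic to $G$. With $\mathcal{G}(n)$ the set of isomorphism classes of graphs on $n$ vertices and $U_P(n)$ the $P$-unique graphs in $\mathcal{G}(n)$, $P$ is weakly distinguishing if $\lim_{n\to\infty}|U_P(n)|/|\mathcal{G}(n)|=0$. *)

(* Defs.v *)
From mathcomp Require Import all_boot all_order all_algebra.
From mathcomp Require Import boolp.

Set Implicit Arguments.
Unset Strict Implicit.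
Unset Printing Implicit Defensive.

Import GRing.Theory Num.Theory.

Definition simpleb n (f : {ffun 'I_n * 'I_n -> bool}) : bool :=
  [forall x, forall y, f (x, y) == f (y, x)] && [forall x, ~~ f (x, x)].

Definition graph n := {f : {ffun 'I_n * 'I_n -> bool} | simpleb f}.

Definition adj n (G : graph n) : rel 'I_n := fun x y => sval G (x, y).

Definition iso m n (G : graph m) (H : graph n) : Prop :=
  exists f : 'I_m -> 'I_n, bijective f /\ forall x y, adj G x y = adj H (f x) (f y).

Definition induced_fun n (G : graph n) (A : {set 'I_n}) :
  {ffun 'I_#|A| * 'I_#|A| -> bool} :=
  [ffun p => adj G (enum_val p.1) (enum_val p.2)].

Lemma induced_simple n (G : graph n) (A : {set 'I_n}) : simpleb (induced_fun G A).
Proof.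
have /andP[/forallP s /forallP i] := svalP G.
apply/andP; split; apply/forallP => x; first apply/forallP => y.
  by rewrite !ffunE /adj /= (eqP (forallP (s _) _)).
by rewrite ffunE /adj /= i.
Qed.

Definition induced n (G : graph n) (A : {set 'I_n}) : graph #|A| :=
  exist _ (induced_fun G A) (induced_simple G A).

Definition graph_class := forall m, graph m -> Prop.

Definition iso_closed (Q : graph_class) : Prop :=
  forall m n (G : graph m) (H : graph n), iso G H -> Q m G -> Q n H.

Definition PQ (Q : graph_class) n (G : graph n) : {poly int} :=
  \sum_(A : {set 'I_n} | `[< Q _ (induced G A) >]) 'X^#|A|.

Definition is_tree p (T : graph p) : Prop :=
  0 < p /\ (forall x y, connect (adj T) x y) /\
  (forall s : seq 'I_p, uniq s -> 2 < size s -> ~~ cycle (adj T) s).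

Definition tree_decomposition n (G : graph n) p (T : graph p)
  (B : 'I_p -> {set 'I_n}) : Prop :=
  [/\ is_tree T,
      (forall v, exists t, v \in B t),
      (forall u v, adj G u v -> exists t, (u \in B t) && (v \in B t)) &
      (forall v t1 t2, v \in B t1 -> v \in B t2 ->
         connect [rel a b | [&& adj T a b, v \in B a & v \in B b]] t1 t2)].

Definition treewidth_le n (G : graph n) (k : nat) : Prop :=
  exists p (T : graph p) (B : 'I_p -> {set 'I_n}),
    tree_decomposition G T B /\ forall t, #|B t| <= k.+1.

Definition graph_poly (R : Type) := forall n, graph n -> R.

Definition P_unique (R : Type) (P : graph_poly R) n (G : graph n) : Prop :=
  forall m (H : graph m), P m H = P n G -> iso H G.

Definition iso_classes n : {set {set graph n}} :=
  [set [set H | `[< iso G H >]] | G : graph n].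

Definition unique_classes (R : Type) (P : graph_poly R) n : {set {set graph n}} :=
  [set [set H | `[< iso G H >]] | G in [set G : graph n | `[< P_unique P G >]]].

Definition weakly_distinguishing (R : Type) (P : graph_poly R) : Prop :=
  forall eps : rat, (0 < eps)%R -> exists N, forall n, (N <= n)%N ->
    (`| (#|unique_classes P n|%:R / #|iso_classes n|%:R : rat) | < eps)%R.

(* Main.v *)
Require Import Defs.
From mathcomp Require Import all_boot all_order all_algebra.
From mathcomp Require Import boolp.
From mathcomp Require Import fingroup perm zify lra.

Set Implicit Arguments.
Unset Strict Implicit.
Unset Printing Implicit Defensive.


Section Basics.

Lemma adj_sym n (G : graph n) x y : adj G x y = adj G y x.
Proof.
have /andP[/forallP s _] := svalP G.
by rewrite /adj (eqP (forallP (s x) y)).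
Qed.

Lemma adj_irr n (G : graph n) x : adj G x x = false.
Proof.
have /andP[_ /forallP i] := svalP G.
by rewrite /adj; apply/negbTE; apply: i.
Qed.

Lemma graph_ext n (G H : graph n) : (forall x y, adj G x y = adj H x y) -> G = H.
Proof.
move=> e; apply: val_inj; apply/ffunP => -[x y]; exact: e.
Qed.

Definition gor_fun n (r : rel 'I_n) : {ffun 'I_n * 'I_n -> bool} :=
  [ffun p => [&& p.1 != p.2, r p.1 p.2 & r p.2 p.1]].

Lemma gor_simple n (r : rel 'I_n) : simpleb (gor_fun r).
Proof.
apply/andP; split; apply/forallP => x; first apply/forallP => y.
  by rewrite !ffunE /= (eq_sym x) (andbC (r x y)).

by rewrite ffunE /= eqxx.
Qed.

Definition gor n (r : rel 'I_n) : graph n := exist _ (gor_fun r) (gor_simple r).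

Lemma adj_gor n (r : rel 'I_n) x y : adj (gor r) x y = [&& x != y, r x y & r y x].
Proof. by rewrite /adj /= ffunE. Qed.

Lemma iso_refl n (G : graph n) : iso G G.
Proof. by exists id; split => //; exists id. Qed.

Lemma iso_sym m n (G : graph m) (H : graph n) : iso G H -> iso H G.
Proof.
move=> [f [[g fg gf] e]]; exists g; split; first by exists f.
by move=> x y; rewrite e !gf.
Qed.

Lemma iso_trans m n p (G : graph m) (H : graph n) (K : graph p) :
  iso G H -> iso H K -> iso G K.
Proof.
move=> [f [bf e]] [g [bg e']]; exists (g \o f); split; first exact: bij_comp.
by move=> x y; rewrite e e'.
Qed.

End Basics.


Lemma path_avoid (X : finType) (e e2 : rel X) l x q :
  (forall a b, e a b -> a != l -> b != l -> e2 a b) ->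
  x != l -> l \notin q -> path e x q -> path e2 x q.
Proof.
move=> he; elim: q x => [|y q IH] x //= xl; rewrite inE negb_or => /andP[ly lq].
case/andP=> exy pq; apply/andP; split.
  by apply: he => //; rewrite eq_sym.
by apply: IH => //; rewrite eq_sym.
Qed.

Lemma connect_avoid (X : finType) (e e2 : rel X) l l' x y :
  (forall t, e l t -> t = l') -> (forall t, e t l -> t = l') ->
  (forall a b, e a b -> a != l -> b != l -> e2 a b) ->
  x != l -> y != l -> connect e x y -> connect e2 x y.
Proof.
move=> hl hr he xl yl /connectP[q pq ey].
case/shortenP: pq ey => q' pq' uq' _ ey.
apply/connectP; exists q' => //.
apply: (path_avoid he xl) => //.
apply/negP => lq.
case/splitPr: lq pq' uq' ey => q1 q2.
rewrite cat_path /= => /and3P[_ ea pq2] uq ey.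
have a_eq := hr _ ea.
case: q2 pq2 uq ey => [|b q2] /=.
  by rewrite last_cat /= => _ _ yE; rewrite yE eqxx in yl.
case/andP=> eb _ uq _.
have b_eq := hl _ eb.
move: uq => uq.
have uq2 : uniq ([:: x & q1] ++ [:: l, b & q2]) by [].
move: uq2.
rewrite cat_uniq => /and3P[_ /hasPn H _].
have bin : b \in [:: l, b & q2] by rewrite !inE eqxx orbT.
have := H b bin.
by rewrite b_eq -a_eq mem_last.
Qed.

Definition acyclic p (T : graph p) :=
  forall s : seq 'I_p, uniq s -> 2 < size s -> ~~ path.cycle (adj T) s.

Definition restr p (T : graph p) (S : {set 'I_p}) : rel 'I_p :=
  fun a b => [&& a \in S, b \in S & adj T a b].

Definition goodseq p (T : graph p) (S : {set 'I_p}) (s : seq 'I_p) :=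
  [&& uniq s, all (mem S) s & path.sorted (adj T) s].

Lemma goodseq_size p (T : graph p) S s : goodseq T S s -> size s <= #|S|.
Proof.
case/and3P=> us as_ _; rewrite -(card_uniqP us); apply: subset_leq_card.
by apply/subsetP => x xs; move/allP: as_ => /(_ x xs).
Qed.

Lemma leaf_exists p (T : graph p) (S : {set 'I_p}) :
  acyclic T -> (forall x y, x \in S -> y \in S -> connect (restr T S) x y) ->
  1 < #|S| ->
  exists l l', [/\ l \in S, l' \in S, l != l' &
                   forall t, t \in S -> adj T l t -> t = l'].
Proof.
move=> acT conS /card_gt1P[x [y [xS yS xy]]].
have /connectP[q pq yE] := conS x y xS yS.
case: q pq yE => [|z q] /=; first by move=> _ yE; rewrite yE eqxx in xy.
case/andP=> /and3P[_ zS xz] _ _.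
pose P m := [exists s : m.-tuple 'I_p, goodseq T S s].
have P2 : P 2.
  apply/existsP; exists [tuple x; z]; rewrite /goodseq /= inE andbT.
  rewrite xS zS /= andbT xz andbT; apply/eqP => xz'; by rewrite xz' adj_irr in xz.
have Pub : forall i, P i -> i <= #|S|.
  by move=> i /existsP[s /goodseq_size]; rewrite size_tuple.
case: (ex_maxnP (ex_intro P 2 P2) Pub) => m /existsP[s gs] mmax.
have m2 : 2 <= m by apply: mmax.
case: s gs => s /= /eqP sz gs.
case: s sz gs => [|l [|l' rest]] //=; [by move=> sz; rewrite -sz in m2 | by move=> sz; rewrite -sz in m2 |].
move=> sz gs.
move: (gs) => /and3P[/andP[ls /andP[l'l' ur]] /and3P[lS l'S restS] /andP[ll' prest]].
exists l, l'; split => //.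
  by apply/negP => /eqP ll; rewrite ll adj_irr in ll'.
move=> t tS lt; apply/eqP/negPn/negP => tl'.
have tl : t != l by apply/negP => /eqP tl; rewrite tl adj_irr in lt.
case: (boolP (t \in rest)) => trest.
  case/splitPr: trest gs prest => r1 r2 gs prest.
  have := acT (l :: l' :: rcons r1 t).
  have -> : uniq (l :: l' :: rcons r1 t).
    move: gs => /and3P[u _ _]; move: u.
    rewrite -cat_rcons -!cat_cons cat_uniq => /andP[-> _] //.
  rewrite /= size_rcons ltnS ltnS ltn0Sn => /(_ isT isT).
  have prest' : path (adj T) l' (r1 ++ t :: r2) := prest.
  rewrite -cat_rcons cat_path in prest'; case/andP: prest' => pr1 _.
  rewrite ll' rcons_path pr1 last_rcons adj_sym lt.
  by [].
have : P m.+1.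
  apply/existsP.
  have szt : size [:: t, l, l' & rest] == m.+1 by rewrite /= sz.
  exists (Tuple szt); rewrite /goodseq /=.
  case/and3P: gs => U A Pth.
  apply/and3P; split.
  - apply/andP; split; last exact U.
    by rewrite !inE !negb_or tl tl' trest.
  - by apply/andP; split; [exact tS | exact A].
  - by apply/andP; split; [rewrite adj_sym; exact lt | exact Pth].
by move/mmax; rewrite ltnn.
Qed.

Definition brel n p (T : graph p) (B : 'I_p -> {set 'I_n}) (S : {set 'I_p}) v
  : rel 'I_p :=
  fun a b => [&& a \in S, b \in S, adj T a b, v \in B a & v \in B b].

Definition TD n p (G : graph n) (T : graph p) (B : 'I_p -> {set 'I_n}) k
  (S : {set 'I_p}) (A : {set 'I_n}) : Prop :=
 [/\ (forall x y, x \in S -> y \in S -> connect (restr T S) x y),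
     (forall v, v \in A -> exists2 t, t \in S & v \in B t),
     (forall u v, u \in A -> v \in A -> adj G u v ->
        exists2 t, t \in S & (u \in B t) && (v \in B t)),
     (forall v t1 t2, v \in A -> t1 \in S -> t2 \in S -> v \in B t1 -> v \in B t2 ->
        connect (brel T B S v) t1 t2) &
     (forall t, t \in S -> #|B t :&: A| <= k.+1)].

Lemma TD_sub n p (G : graph n) (T : graph p) B k S A (A' : {set 'I_n}) :
  TD G T B k S A -> A' \subset A -> TD G T B k S A'.
Proof.
move=> [h1 h2 h3 h4 h5] /subsetP sA; split => //.
- by move=> v /sA; apply: h2.
- by move=> u v /sA uA /sA vA; apply: h3.
- by move=> v t1 t2 /sA; apply: h4.
- move=> t tS; apply: leq_trans (h5 t tS); apply: subset_leq_card.
  by apply: setIS; apply/subsetP.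
Qed.

Lemma deg_of_unique n p (G : graph n) (T : graph p) B k S A v l :
  TD G T B k S A -> v \in A -> l \in S -> v \in B l ->
  (forall t, t \in S -> v \in B t -> t = l) ->
  #|[set u in A | adj G v u]| <= k.
Proof.
move=> [_ _ h3 _ h5] vA lS vl uniq_l.
have sub : [set u in A | adj G v u] \subset (B l :&: A) :\ v.
  apply/subsetP => u; rewrite inE => /andP[uA vu].
  have [t tS /andP[ut vt]] := h3 u v uA vA (etrans (adj_sym _ _ _) vu).
  rewrite (uniq_l t tS vt) in ut.
  rewrite !inE ut uA /= andbT; apply/eqP => uv; by rewrite uv adj_irr in vu.
apply: leq_trans (subset_leq_card sub) _.
have := h5 l lS; rewrite (cardsD1 v (B l :&: A)) !inE vl vA /=.
by rewrite add1n ltnS.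
Qed.

Lemma low_degree n p (G : graph n) (T : graph p) B k S A :
  acyclic T -> TD G T B k S A -> A != set0 ->
  exists2 v, v \in A & #|[set u in A | adj G v u]| <= k.
Proof.
move=> acT.
elim: {S}#|S|.+1 {-2}S (ltnSn #|S|) => // m IH S Sm td A0.
have td' := td; case: td' => [h1 h2 h3 h4 h5].
case/set0Pn: A0 => v0 v0A.
case: (leqP #|S| 1) => S1.
  have [t tS vt] := h2 v0 v0A.
  exists v0 => //; apply: (deg_of_unique td v0A tS vt) => t' t'S _.
  apply/eqP/negPn/negP => tt'.
  have : 1 < #|S| by apply/card_gt1P; exists t', t.
  by rewrite ltnNge S1.
have [l [l' [lS l'S ll' leaf]]] := leaf_exists acT h1 S1.
case: (boolP [exists v in A, (v \in B l) && (v \notin B l')]).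
  case/exists_inP => v vA /andP[vl vl'].
  exists v => //; apply: (deg_of_unique td vA lS vl) => t tS vt.
  have /connectP[q pq ->] := h4 v l t vA lS tS vl vt.
  case: q pq => [|z q] //= /andP[/and5P[_ zS lz _ vz] _].
  by move: vl'; rewrite -(leaf z zS lz) vz.
move/exists_inPn => hB.
have hB' : forall v, v \in A -> v \in B l -> v \in B l'.
  by move=> v vA vl; move: (hB v vA); rewrite vl /= negbK.
have hl : forall t, t \in S -> adj T l t -> t = l' by [].
have hr : forall t, t \in S -> adj T t l -> t = l'.
  by move=> t tS tl; apply: leaf => //; rewrite adj_sym.
have l'l : l' != l by rewrite eq_sym.
apply: (IH (S :\ l)).
  by rewrite (cardsD1 l S) lS add1n ltnS in Sm.
split.
- move=> x y; rewrite !in_setD1 => /andP[xl xS] /andP[yl yS].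
  apply: (connect_avoid (e := restr T S) (l := l) (l' := l')) => //.
  + by move=> t /and3P[_ tS lt]; apply: hl.
  + by move=> t /and3P[tS _ tl]; apply: hr.
  + move=> a b /and3P[aS bS ab] al bl.
    by rewrite /restr !in_setD1 al bl aS bS ab.
  + exact: h1.
- move=> v vA; have [t tS vt] := h2 v vA.
  case: (eqVneq t l) => [tl|tl].
    by exists l'; rewrite ?in_setD1 ?l'l ?l'S //; apply: hB'; rewrite // -tl.
  by exists t; rewrite // in_setD1 tl tS.
- move=> u v uA vA uv; have [t tS /andP[ut vt]] := h3 u v uA vA uv.
  case: (eqVneq t l) => [tl|tl].
    exists l'; rewrite ?in_setD1 ?l'l ?l'S //.
    by rewrite !hB' // -tl.
  by exists t; rewrite ?in_setD1 ?tl ?tS ?ut ?vt.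
- move=> v t1 t2 vA; rewrite !in_setD1 => /andP[t1l t1S] /andP[t2l t2S] v1 v2.
  apply: (connect_avoid (e := brel T B S v) (l := l) (l' := l')) => //.
  + by move=> t /and5P[_ tS lt _ _]; apply: hl.
  + by move=> t /and5P[tS _ tl _ _]; apply: hr.
  + move=> a b /and5P[aS bS ab va vb] al bl.
    by rewrite /brel !in_setD1 al bl aS bS ab va vb.
  + exact: h4.
- by move=> t; rewrite in_setD1 => /andP[_ tS]; apply: h5.
by apply/set0Pn; exists v0.
Qed.

Definition indep n (G : graph n) (I : {set 'I_n}) : bool :=
  [forall u in I, forall v in I, ~~ adj G u v].

Lemma indep_large n p (G : graph n) (T : graph p) B k S A :
  acyclic T -> TD G T B k S A ->
  exists I : {set 'I_n}, [/\ I \subset A, indep G I & #|A| <= k.+1 * #|I|].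
Proof.
move=> acT.
elim: {A}#|A|.+1 {-2}A (ltnSn #|A|) => // m IH A Am td.
case: (eqVneq A set0) => [->|A0].
  by exists set0; rewrite sub0set cards0 muln0; split => //; apply/forall_inP => u; rewrite inE.
have [v vA dv] := low_degree acT td A0.
set N := v |: [set u in A | adj G v u].
set A' := A :\: N.
have sA' : A' \subset A by apply: subsetDl.
have vA' : v \notin A' by rewrite !inE eqxx.
have ltA : #|A'| < #|A|.
  by apply: proper_card; apply/properP; split => //; exists v.
have [I' [sI' iI' cI']] := IH A' (leq_trans ltA (ltnSE Am)) (TD_sub td sA').
have vI' : v \notin I' by apply: contra vA'; apply: (subsetP sI').
exists (v |: I'); split.
- by rewrite subUset sub1set vA (subset_trans sI' sA').
- apply/forall_inP => x xI; apply/forall_inP => y yI.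
  have noadj : forall w, w \in I' -> ~~ adj G v w.
    move=> w wI; have := subsetP sI' w wI; rewrite !inE negb_or => /andP[/andP[_ h] wA].
    by move: h; rewrite wA.
  move: xI yI; rewrite !inE => /orP[/eqP->|xI] /orP[/eqP->|yI].
  + by rewrite adj_irr.
  + exact: noadj.
  + by rewrite adj_sym; apply: noadj.
  + by move/forall_inP: iI' => /(_ x xI) /forall_inP /(_ y yI).
- rewrite cardsU1 vI' add1n mulnS.
  rewrite -(cardsID N A).
  apply: leq_add; last exact: cI'.
  apply: leq_trans (subset_leq_card (subsetIr A N)) _.
  by rewrite cardsU1; case: (v \notin _) => /=; rewrite ?add1n ?add0n // ltnW.
Qed.

Lemma tw_TD n (G : graph n) (A : {set 'I_n}) k :
  treewidth_le (induced G A) k ->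
  exists p (T : graph p) (B : 'I_p -> {set 'I_n}), acyclic T /\ TD G T B k setT A.
Proof.
move=> [p [T [B' [[[_ [conT acT]] cov edg bconn] sz]]]].
pose B t := [set (enum_val x : 'I_n) | x in B' t].
have memB : forall v (vA : v \in A) t, (v \in B t) = (enum_rank_in vA v \in B' t).
  move=> v vA t; rewrite /B -{1}(enum_rankK_in vA vA) mem_imset //.
  exact: enum_val_inj.
exists p, T, B; split; first exact: acT.
split.
- move=> x y _ _; rewrite (eq_connect (e' := adj T)) ?conT //.
  by move=> a b; rewrite /restr !inE.
- move=> v vA; have [t ht] := cov (enum_rank_in vA v).
  by exists t; rewrite ?inE // memB.
- move=> u v uA vA uv.
  have : adj (induced G A) (enum_rank_in uA u) (enum_rank_in vA v).
    by rewrite /adj /= ffunE /= !enum_rankK_in.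
  case/edg => t /andP[ut vt]; exists t; rewrite ?inE // !memB ut vt.
  by [].
- move=> v t1 t2 vA _ _; rewrite !memB => v1 v2.
  rewrite (eq_connect (e' := [rel a b | [&& adj T a b, enum_rank_in vA v \in B' a
       & enum_rank_in vA v \in B' b]])); first exact: bconn.
  by move=> a b; rewrite /brel !inE !memB.
- move=> t _; apply: leq_trans (subset_leq_card (subsetIl _ _)) _.
  by apply: leq_trans (leq_imset_card _ _) (sz t).
Qed.

Lemma Q_indep n (G : graph n) (A : {set 'I_n}) k :
  treewidth_le (induced G A) k ->
  exists I : {set 'I_n}, [/\ I \subset A, indep G I & #|A| <= k.+1 * #|I|].
Proof.
case/tw_TD => p [T [B [acT td]]]; exact: indep_large acT td.
Qed.


Lemma adj_gor_simple n (r : rel 'I_n) :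
  (forall x y, r x y = r y x) -> (forall x, r x x = false) ->
  forall x y, adj (gor r) x y = r x y.
Proof.
move=> rs ri x y; rewrite adj_gor -rs andbb.
by case: (eqVneq x y) => [->|]; rewrite ?ri.
Qed.

Lemma card_bigcup_le (T I : finType) (P : pred I) (F : I -> {set T}) :
  #|\bigcup_(i | P i) F i| <= \sum_(i | P i) #|F i|.
Proof.
apply: (big_ind2 (fun (X : {set T}) y => #|X| <= y)) => //.
- by rewrite cards0.
- move=> a1 a2 b1 b2 h1 h2; rewrite cardsU; apply: leq_trans (leq_subr _ _) _.
  exact: leq_add.
Qed.

Lemma card_imset_factor (aT rT1 rT2 : finType) (f : aT -> rT1) (g : aT -> rT2)
  (D : {set aT}) :
  {in D &, forall x y, g x = g y -> f x = f y} -> #|f @: D| <= #|g @: D|.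
Proof.
move=> fg; case: (set_0Vmem D) => [->|[x0 x0D]].
  by rewrite !imset0 cards0.
pose h c := f (odflt x0 [pick x in D | g x == c]).
have : f @: D \subset h @: (g @: D).
  apply/subsetP => y /imsetP[x xD ->].
  apply/imsetP; exists (g x); first exact: imset_f.
  rewrite /h; case: pickP => [z /andP[zD /eqP gz]|/(_ x)]; last by rewrite xD eqxx.
  by rewrite /= (fg z x).
move/subset_leq_card => h1; apply: leq_trans h1 _; exact: leq_imset_card.
Qed.

Lemma card_graph_ge m : 2 ^ 'C(m, 2) <= #|{: graph m}|.
Proof.
pose E := {X : {set 'I_m} | #|X| == 2}.
pose F (g : {ffun E -> bool}) : graph m :=
  gor (fun x y => oapp g false (insub [set x; y])).
have Finj : injective F.
  move=> g1 g2 e; apply/ffunP => X.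
  have /cards2P[x [y [xy eX]]] := valP X.
  have hX : insub [set x; y] = Some X by rewrite -eX valK.
  have hX' : insub [set y; x] = Some X by rewrite setUC hX.
  have := congr1 (fun G => adj G x y) e.
  by rewrite /F !adj_gor hX hX' /= xy !andbb.
have cE : #|{: E}| = 'C(m, 2).
  rewrite card_sig -[in RHS](card_ord m) -(card_draws _ 2).
  by apply: eq_card => X; rewrite !inE.
rewrite -cE.
have -> : 2 ^ #|{: E}| = #|{: {ffun E -> bool}}| by rewrite card_ffun card_bool.
rewrite -(card_imset _ Finj).
exact: max_card.
Qed.

Definition relabel n (G : graph n) (s : {perm 'I_n}) : graph n :=
  gor (fun x y => adj G ((s^-1)%g x) ((s^-1)%g y)).

Lemma class_card n (G : graph n) : #|[set H : graph n | `[< iso G H >]]| <= n`!.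
Proof.
have sub : [set H : graph n | `[< iso G H >]] \subset [set relabel G s | s : {perm 'I_n}].
  apply/subsetP => H; rewrite inE => /asboolP[f [bf e]].
  have fi : injective f by apply: bij_inj.
  apply/imsetP; exists (perm fi) => //.
  apply: graph_ext => a b.
  rewrite /relabel adj_gor_simple; last 2 first.
  - by move=> x y; rewrite adj_sym.
  - by move=> x; rewrite adj_irr.
  by rewrite e -!(permE fi) !permKV.
apply: leq_trans (subset_leq_card sub) _.
apply: leq_trans (leq_imset_card _ _) _.
by rewrite card_Sn.
Qed.

Lemma classes_bound n : #|{: graph n}| <= #|iso_classes n| * n`!.
Proof.
have sub : [set: graph n] \subset \bigcup_(c | c \in iso_classes n) c.
  apply/subsetP => H _; apply/bigcupP; exists [set K : graph n | `[< iso H K >]].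
    by apply/imsetP; exists H.
  by rewrite inE; apply/asboolP; apply: iso_refl.
rewrite -cardsT; apply: leq_trans (subset_leq_card sub) _.
apply: leq_trans (card_bigcup_le _ _) _.
rewrite -sum_nat_const; apply: leq_sum => c /imsetP[G _ ->].
exact: class_card.
Qed.

Definition Hrel n (I : {set 'I_n}) (H : graph #|I|) : rel 'I_n :=
  fun x y => [exists a, exists b, [&& enum_val a == x, enum_val b == y & adj H a b]].

Lemma HrelE n (I : {set 'I_n}) (H : graph #|I|) a b :
  Hrel H (enum_val a) (enum_val b) = adj H a b.
Proof.
apply/existsP/idP => [[a' /existsP[b' /and3P[/eqP ea /eqP eb h]]]|h].
  by rewrite -(enum_val_inj ea) -(enum_val_inj eb).
by exists a; apply/existsP; exists b; rewrite !eqxx h.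
Qed.

Definition mrel n (I : {set 'I_n}) (GH : graph n * graph #|I|) : rel 'I_n :=
  fun x y => if (x \in I) && (y \in I) then Hrel GH.2 x y else adj GH.1 x y.
Arguments mrel {n} I GH.

Lemma mrel_sym n (I : {set 'I_n}) GH x y : mrel I GH x y = mrel I GH y x.
Proof.
rewrite /mrel andbC; case: ifP => _; last exact: adj_sym.
apply/existsP/existsP => -[a /existsP[b /and3P[ea eb h]]];
  exists b; apply/existsP; exists a; by rewrite ea eb adj_sym h.
Qed.

Lemma mrel_irr n (I : {set 'I_n}) GH x : mrel I GH x x = false.
Proof.
rewrite /mrel; case: ifP => _; last exact: adj_irr.
apply/negbTE/existsP => -[a /existsP[b /and3P[/eqP ea /eqP eb h]]].
by move: h; rewrite -eb in ea; rewrite (enum_val_inj ea) adj_irr.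
Qed.

Definition merge n (I : {set 'I_n}) (GH : graph n * graph #|I|) : graph n :=
  gor (mrel I GH).
Arguments merge {n} I GH.

Lemma adj_merge n (I : {set 'I_n}) GH x y : adj (merge I GH) x y = mrel I GH x y.
Proof. by rewrite adj_gor_simple //; [apply: mrel_sym | apply: mrel_irr]. Qed.

Lemma badI_bound n (I : {set 'I_n}) :
  #|[set G : graph n | indep G I]| * #|{: graph #|I|}| <= #|{: graph n}|.
Proof.
set D := setX [set G : graph n | indep G I] [set: graph #|I|].
have inj : {in D &, injective (merge I)}.
  move=> [G1 H1] [G2 H2]; rewrite !inE /= !andbT => i1 i2 e.
  have e' : forall x y, mrel I (G1, H1) x y = mrel I (G2, H2) x y.
    by move=> x y; rewrite -!adj_merge e.
  congr (_, _).
    apply: graph_ext => x y; have := e' x y; rewrite /mrel /=.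
    case: ifP => // /andP[xI yI] _.
    move/forall_inP: i1 => /(_ x xI) /forall_inP /(_ y yI) /negbTE ->.
    by move/forall_inP: i2 => /(_ x xI) /forall_inP /(_ y yI) /negbTE ->.
  apply: graph_ext => a b; have := e' (enum_val a) (enum_val b).
  by rewrite /mrel /= !enum_valP /= !HrelE.
rewrite -cardsT -cardsX -(card_in_imset inj); exact: max_card.
Qed.

Definition Bad n r := [set G : graph n | [exists I : {set 'I_n}, (#|I| == r) && indep G I]].

Lemma card_sets n : #|{: {set 'I_n}}| = 2 ^ n.
Proof. by rewrite -cardsT -powersetT card_powerset cardsT card_ord. Qed.

Lemma bad_bound n r : #|Bad n r| * 2 ^ 'C(r, 2) <= 2 ^ n * #|{: graph n}|.
Proof.
have sub : Bad n r \subset \bigcup_(I : {set 'I_n} | #|I| == r) [set G : graph n | indep G I].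
  apply/subsetP => G; rewrite inE => /existsP[I /andP[cI iI]].
  by apply/bigcupP; exists I => //; rewrite inE.
apply: leq_trans (leq_mul (subset_leq_card sub) (leqnn _)) _.
apply: leq_trans (leq_mul (card_bigcup_le _ _) (leqnn _)) _.
rewrite big_distrl /=.
apply: leq_trans (_ : \sum_(I : {set 'I_n} | #|I| == r) #|{: graph n}| <= _).
  apply: leq_sum => I /eqP cI.
  apply: leq_trans (badI_bound I); apply: leq_mul => //.
  by rewrite -cI; apply: card_graph_ge.
rewrite sum_nat_const -card_sets; apply: leq_mul => //; exact: max_card.
Qed.

Import GRing.Theory.

Definition cset (Q : graph_class) n (G : graph n) (i : nat) : {set {set 'I_n}} :=
  [set A : {set 'I_n} | `[< Q _ (induced G A) >] && (#|A| == i)].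

Definition code (Q : graph_class) n s (G : graph n) : {ffun 'I_s -> 'I_(2 ^ n).+1} :=
  [ffun i : 'I_s => inord #|cset Q G i|].

Lemma PQ_expand (Q : graph_class) n s (G : graph n) :
  (forall A : {set 'I_n}, `[< Q _ (induced G A) >] -> #|A| <= s) ->
  PQ Q G = (\sum_(i < s.+1) 'X^i *+ #|cset Q G i|)%R.
Proof.
move=> hs; rewrite /PQ.
rewrite (partition_big (fun A : {set 'I_n} => (inord #|A| : 'I_s.+1)) predT) //.
apply: eq_bigr => i _.
rewrite (eq_bigl (fun A => A \in cset Q G i)); last first.
  move=> A; rewrite /cset inE; case: (boolP `[< _ >]) => //= qA.
  by rewrite -(inj_eq val_inj) /= inordK // ltnS hs.
rewrite (eq_bigr (fun _ => ('X^i : {poly int})%R)); last by move=> A; rewrite inE => /andP[_ /eqP ->].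
by rewrite sumr_const.
Qed.

Lemma code_PQ (Q : graph_class) n s (G1 G2 : graph n) :
  (forall A : {set 'I_n}, `[< Q _ (induced G1 A) >] -> #|A| <= s) ->
  (forall A : {set 'I_n}, `[< Q _ (induced G2 A) >] -> #|A| <= s) ->
  @code Q n s.+1 G1 = @code Q n s.+1 G2 -> PQ Q G1 = PQ Q G2.
Proof.
move=> h1 h2 e; rewrite (PQ_expand h1) (PQ_expand h2); apply: eq_bigr => i _.
congr (_ *+ _)%R.
have := congr1 (fun f : {ffun 'I_s.+1 -> 'I_(2 ^ n).+1} => val (f i)) e; rewrite /= !ffunE !inordK //.
  by rewrite ltnS -card_sets max_card.
by rewrite ltnS -card_sets max_card.
Qed.

Lemma card_codes n s : #|{: {ffun 'I_s -> 'I_(2 ^ n).+1}}| = (2 ^ n).+1 ^ s.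
Proof. by rewrite card_ffun !card_ord. Qed.


Lemma subset_card_eq (T : finType) (I : {set T}) r :
  r <= #|I| -> exists J : {set T}, J \subset I /\ #|J| = r.
Proof.
case/card_geqP => s [us ss sI].
exists [set x in s]; split.
  by apply/subsetP => x; rewrite inE; apply: sI.
by rewrite cardsE (card_uniqP us).
Qed.

Lemma indep_sub n (G : graph n) (I J : {set 'I_n}) : J \subset I -> indep G I -> indep G J.
Proof.
move=> /subsetP JI /forall_inP iI; apply/forall_inP => x xJ; apply/forall_inP => y yJ.
by move/forall_inP: (iI x (JI x xJ)) => /(_ y (JI y yJ)).
Qed.

Lemma good_bound (Q : graph_class) k n r (G : graph n) :
  (forall m (H : graph m), Q m H -> treewidth_le H k) ->
  G \notin Bad n r ->
  forall A : {set 'I_n}, `[< Q _ (induced G A) >] -> #|A| <= k.+1 * r.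
Proof.
move=> htw Gb A /asboolP qA.
have [I [IA iI cA]] := Q_indep (htw _ _ qA).
apply: leq_trans cA _; rewrite leq_mul2l; apply/orP; right.
case: (leqP r #|I|) => [rI|rI]; last exact: ltnW.
have [J [JI cJ]] := subset_card_eq rI.
have : G \in Bad n r.
  by rewrite inE; apply/existsP; exists J; rewrite cJ eqxx (indep_sub JI iI).
by rewrite (negbTE Gb).
Qed.

Lemma uc_bound (Q : graph_class) k n r :
  (forall m (H : graph m), Q m H -> treewidth_le H k) ->
  #|unique_classes (PQ Q) n| <= #|Bad n r| + (2 ^ n).+1 ^ (k.+1 * r).+1.
Proof.
move=> htw.
set U := [set G : graph n | `[< P_unique (PQ Q) G >]].
set cls := fun G : graph n => [set H : graph n | `[< iso G H >]].
have -> : unique_classes (PQ Q) n = cls @: U by [].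
rewrite -(setID U (Bad n r)) imsetU cardsU.
apply: leq_trans (leq_subr _ _) _.
apply: leq_add.
  apply: leq_trans (leq_imset_card _ _) _.
  by apply: subset_leq_card; apply: subsetIr.
apply: leq_trans (card_imset_factor (g := @code Q n (k.+1 * r).+1) _) _.
  move=> G1 G2; rewrite !in_setD => /andP[G1b G1U] /andP[G2b G2U] e.
  rewrite inE in G1U.
  have e' := code_PQ (good_bound htw G1b) (good_bound htw G2b) e.
  move/asboolP: G1U => /(_ n G2 (esym e')) iso21.
  apply/setP => H; rewrite !inE; apply/asboolP/asboolP => h.
    exact: iso_trans iso21 h.
  exact: iso_trans (iso_sym iso21) h.
apply: leq_trans (max_card _) _.
by rewrite card_codes.
Qed.


Lemma fact_le_pow n : n`! <= n ^ n.
Proof.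
elim: n => // n IH; rewrite factS expnS leq_mul2l; apply/orP; right.
apply: leq_trans IH _; case: n => // n; rewrite leq_exp2r //.
Qed.

Lemma pow_le2 n e m : n < 2 ^ e -> n ^ m <= 2 ^ (e * m).
Proof.
move=> ne; rewrite expnM; case: m => // m; rewrite leq_exp2r //; exact: ltnW.
Qed.

Lemma sq_le_pow l : 4 <= l -> l * l <= 2 ^ l.
Proof.
elim: l => // l IH; rewrite leq_eqVlt => /orP[/eqP <- //|].
rewrite ltnS => l4; have h := IH l4; rewrite expnS.
apply: (@leq_trans ((l * l) * 2)); first nia.
by rewrite mulnC leq_mul2l h orbT.
Qed.

Lemma lin_le_pow D l : D + 4 <= l -> D * l.+1 <= 2 ^ l.
Proof.
move=> h; apply: leq_trans (sq_le_pow _) => //; last by lia.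
nia.
Qed.

Lemma log_small D n : 2 ^ (D + 4) <= n -> D * (trunc_log 2 n).+1 <= n.
Proof.
move=> h; have n0 : 0 < n by apply: leq_trans h; rewrite expn_gt0.
have l4 : D + 4 <= trunc_log 2 n by apply: trunc_log_max.
apply: leq_trans (lin_le_pow l4) (trunc_logP _ n0) => //.
Qed.

Lemma bin2_double m : 'C(m, 2) * 2 = m * m.-1.
Proof.
elim: m => // m IH; rewrite binS bin1 mulnDl IH /=; case: m {IH} => //= m; nia.
Qed.

Lemma A1 r c : 8 * c + 9 <= r -> 16 * (r.+1 * c) <= 2 * r * r.+1.
Proof. move=> h; have h' : 16 * c <= 2 * r by lia. nia. Qed.

Lemma A2 r e n : e * n * 8 < r.+1 * r.+1 -> e <= n -> 16 * n <= 2 * r * r.+1 ->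
  9 <= r -> (1 + e + e * n + n) * 2 <= r * r.-1.
Proof. case: r => // r /=. nia. Qed.

Lemma A3 n e s : e * n * 8 <= n * n -> e <= n -> 8 * s <= n -> 20 <= n ->
  (1 + e + e * n + n.+1 * s.+1) * 2 <= n * n.-1.
Proof. case: n => // n /=. nia. Qed.

Lemma numeric k : exists N0, forall n, N0 <= n ->
  2 * n * n`! * 2 ^ n <= 2 ^ 'C(n %/ (8 * k.+1), 2) /\
  2 * n * n`! * (2 ^ n).+1 ^ (k.+1 * (n %/ (8 * k.+1))).+1 <= 2 ^ 'C(n, 2).
Proof.
set c := 8 * k.+1.
have c0 : 0 < c by rewrite /c; timeout 15 lia.
set D := 8 * c * c.
exists (2 ^ (D + 4) + c * (8 * c + 9) + 20) => n hn.
set r := n %/ c.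
set e := (trunc_log 2 n).+1.
have hDe : D * e <= n by apply: log_small; timeout 15 lia.
have ne : n < 2 ^ e by apply: trunc_log_ltn.
have hr1 : r * c <= n by apply: leq_trunc_div.
have hr2 : n < r.+1 * c by apply: ltn_ceil.
have hr3 : 8 * c + 9 <= r by rewrite /r leq_divRL //; timeout 15 lia.
have hG : 2 * n * n`! <= 2 ^ (1 + e + e * n).
  rewrite expnD [2 ^ (1 + e)]expnD expn1; apply: leq_mul; first apply: leq_mul => //.
    exact: ltnW.
  apply: leq_trans (fact_le_pow n) _; exact: (pow_le2 n ne).
have hen : e * n * 8 < r.+1 * r.+1.
  have h1 : D * e * n <= n * n by rewrite leq_mul2r hDe orbT.
  have h2 : n * n < r.+1 * c * (r.+1 * c) by apply: ltn_mul.
  have h3 : c * c * (e * n * 8) < c * c * (r.+1 * r.+1).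
    apply: leq_ltn_trans _ (leq_trans h2 _); first by rewrite /D; timeout 15 lia.
    by rewrite /D; timeout 15 lia.
  by rewrite ltn_pmul2l ?muln_gt0 ?c0 in h3.
have hen2 : e * n * 8 <= n * n.
  have h1 : D * e * n <= n * n by rewrite leq_mul2r hDe orbT.
  apply: leq_trans h1; rewrite /D.
  have -> : 8 * c * c * e * n = (c * c) * (e * n * 8) by lia.
  by rewrite leq_pmull // muln_gt0 c0.
split.
  apply: leq_trans (leq_mul hG (leqnn _)) _.
  rewrite -expnD leq_exp2l //.
  rewrite -(leq_pmul2r (_ : 0 < 2)) // bin2_double.
  have he : e <= n by apply: leq_trans hDe; apply: leq_pmull.
  have rr : 16 * n <= 2 * r * r.+1.
    apply: leq_trans (_ : 16 * (r.+1 * c) <= _); first by rewrite leq_mul2l ltnW.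
    exact: A1.
  apply: A2 => //; apply: leq_trans hr3; exact: leq_addl.
apply: leq_trans (leq_mul hG (leqnn _)) _.
have h2 : (2 ^ n).+1 ^ (k.+1 * r).+1 <= 2 ^ (n.+1 * (k.+1 * r).+1).
  rewrite expnM leq_exp2r // expnS; have := expn_gt0 2 n; timeout 15 lia.
apply: leq_trans (leq_mul (leqnn _) h2) _.
rewrite -expnD leq_exp2l //.
rewrite -(leq_pmul2r (_ : 0 < 2)) // bin2_double.
have he : e <= n by apply: leq_trans hDe; apply: leq_pmull.
have hs : 8 * (k.+1 * r) <= n by apply: leq_trans hr1; rewrite /c; timeout 15 lia.
apply: A3 => //; apply: leq_trans hn; exact: leq_addl.
Qed.


Import Order.TTheory GRing.Theory Num.Theory.

Lemma key_nat (Q : graph_class) k :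
  (forall m (G : graph m), Q m G -> treewidth_le G k) ->
  exists N0, forall n, N0 <= n ->
    n * #|unique_classes (PQ Q) n| <= #|iso_classes n|.
Proof.
move=> htw; have [N0 hN0] := numeric k; exists N0 => n hn.
set r := n %/ (8 * k.+1).
have [F1 F2] := hN0 n hn.
set u := #|unique_classes (PQ Q) n|.
set X := #|{: graph n}|.
set b := #|Bad n r|.
set c := (2 ^ n).+1 ^ (k.+1 * r).+1.
have hu : u <= b + c := @uc_bound Q k n r htw.
have hb : b * 2 ^ 'C(r, 2) <= 2 ^ n * X := bad_bound n r.
have hX : 2 ^ 'C(n, 2) <= X := card_graph_ge n.
have hcl : X <= #|iso_classes n| * n`! := classes_bound n.
have h1 : 2 * n * n`! * b <= X.
  rewrite -(leq_pmul2r (expn_gt0 2 'C(r, 2))).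
  rewrite -mulnA; apply: leq_trans (leq_mul (leqnn _) hb) _.
  by rewrite mulnA [X * _]mulnC leq_mul2r F1 orbT.
have h2 : 2 * n * n`! * c <= X by apply: leq_trans F2 hX.
have h3 : n * u * n`! <= X.
  rewrite -(leq_pmul2l (_ : 0 < 2)) //.
  apply: (@leq_trans (2 * n * n`! * b + 2 * n * n`! * c)).
    rewrite -mulnDr [n * u]mulnC -!mulnA [u * _]mulnC !mulnA leq_mul2l hu orbT //.
  lia.
rewrite -(leq_pmul2r (fact_gt0 n)); exact: leq_trans h3 hcl.
Qed.

Unset Implicit Arguments.

Theorem corollary2 (k : nat) (Q : graph_class) :
  iso_closed Q ->
  (forall m (G : graph m), Q m G -> treewidth_le G k) ->
  weakly_distinguishing (PQ Q).
Proof.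
move=> _ htw eps eps0.
have [N0 hN0] := key_nat htw.
have ie : (0 <= eps^-1)%R by rewrite invr_ge0 ltW.
have hM := archi_boundP ie.
set M := Num.Def.archi_bound eps^-1 in hM.
exists (maxn N0 (maxn M 1)) => n hn.
have nN0 : (N0 <= n)%N by lia.
have nM : (M <= n)%N by lia.
have key := hN0 n nN0.
set u := #|unique_classes (PQ Q) n| in key *.
set cl := #|iso_classes n| in key *.
have cl0 : (0 < cl)%N.
  have h := leq_trans (card_graph_ge n) (classes_bound n).
  rewrite lt0n; apply/eqP => c0; move: h; rewrite -/cl c0 mul0n leqn0 expn_eq0.
  by [].
have cl0' : (0 < cl%:R :> rat)%R by rewrite ltr0n.
have keyR : (u%:R * n%:R <= cl%:R :> rat)%R by rewrite -natrM ler_nat mulnC.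
have nR : (eps^-1 < n%:R :> rat)%R.
  by apply: lt_le_trans hM _; rewrite ler_nat.
have en : (1 < eps * n%:R :> rat)%R.
  have e0 : eps != 0%R by rewrite gt_eqF.
  by rewrite -{1}(mulfV e0) ltr_pM2l.
rewrite ger0_norm; last by rewrite divr_ge0 ?ler0n.
rewrite ltr_pdivrMr //.
have u0 : (0 <= u%:R :> rat)%R by rewrite ler0n.
nra.
Qed.
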